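(* $\mathrm{WL}_1\not\preceq\omega^{(3)}$: there exist graphs $G$ and $H$ with $\omega^{(3)}(G)=\omega^{(3)}(H)$ but $\mathrm{WL}_1(G)\ne\mathrm{WL}_1(H)$.
   Context: Graphs are finite, simple and undirected; an $N$-vertex graph has $V(G)=\{1,\dots,N\}$. Let $w_k(x,y)$ be the number of walks of length $k$ from $x$ to $y$, $w_*(x,y)=(w_0(x,y),\dots,w_{N-1}(x,y))$. Define $\omega_0(x)=w_*(x,x)$, $\omega_{r+1}(x)=\big(\omega_r(x),\{\!\{(w_*(x,y),\omega_r(y))\}\!\}_{y\in V(G)}\big)$, where $\{\!\{\cdot\}\!\}$ denotes a multiset, and $\omega^{(r)}(G)=\{\!\{\omega_r(x)\}\!\}_{x\in V(G)}$. Color refinement: $C^0(x)$ uniform, $C^{r+1}(x)=\big(C^r(x),\{\!\{C^r(y)\}\!\}_{y\in N(x)}\big)$; $\mathrm{WL}_1(G)=\{\!\{C^N(x)\}\!\}_{x\in V(G)}$. *)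

(* Defs.v *)
From HB Require Import structures.
From mathcomp Require Import all_boot.
From mathcomp.finmap Require Import finmap multiset.

Set Implicit Arguments.
Unset Strict Implicit.
Unset Printing Implicit Defensive.
Local Open Scope mset_scope.
Local Open Scope nat_scope.

(* A finite simple undirected graph on N vertices {1..N} is represented by its
   adjacency relation [e : rel 'I_N], required (in the statement) to be
   symmetric and irreflexive. *)

Fixpoint walks (N : nat) (e : rel 'I_N) (k : nat) (x y : 'I_N) : nat :=
  match k with
  | 0 => (x == y : nat)
  | k'.+1 => \sum_(z : 'I_N | e x z) walks e k' z y
  end.

Definition wvec (N : nat) (e : rel 'I_N) (x y : 'I_N) : seq nat :=
  [seq walks e k x y | k <- iota 0 N].

Fixpoint omega_type (r : nat) : choiceType :=
  match r with
  | 0 => (seq nat : choiceType)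
  | r'.+1 => ((omega_type r' * {mset (seq nat * omega_type r')%type})%type : choiceType)
  end.

Fixpoint omega (N : nat) (e : rel 'I_N) (r : nat) (x : 'I_N) : omega_type r :=
  match r return omega_type r with
  | 0 => wvec e x x
  | r'.+1 => (omega e r' x,
              seq_mset [seq (wvec e x y, omega e r' y) | y <- enum 'I_N])
  end.

Definition omega_graph (N : nat) (e : rel 'I_N) (r : nat) : (multiset (omega_type r)) :=
  seq_mset [seq omega e r x | x <- enum 'I_N].

Fixpoint color_type (r : nat) : choiceType :=
  match r with
  | 0 => (unit : choiceType)
  | r'.+1 => ((color_type r' * {mset color_type r'})%type : choiceType)
  end.

Fixpoint color (N : nat) (e : rel 'I_N) (r : nat) (x : 'I_N) : color_type r :=
  match r return color_type r with
  | 0 => tt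
  | r'.+1 => (color e r' x, seq_mset [seq color e r' y | y <- enum 'I_N & e x y])
  end.

Definition WL1 (N : nat) (e : rel 'I_N) : (multiset (color_type N)) :=
  seq_mset [seq color e N x | x <- enum 'I_N].

(* Main.v *)
Require Import Defs.
From HB Require Import structures.
From mathcomp Require Import all_boot.
From mathcomp.finmap Require Import finmap multiset.
From Stdlib Require BinNat.
From Corelib Require Import BinNums PosDef.

Set Implicit Arguments.
Unset Strict Implicit.
Unset Printing Implicit Defensive.

Definition Nadd (a b : N) : N :=
  match a, b with
  | N0, _ => b
  | _, N0 => a
  | Npos p, Npos q => Npos (Pos.add p q)
  end.

Lemma NaddE a b : nat_of_bin (Nadd a b) = nat_of_bin a + nat_of_bin b.
Proof. by case: a => [|p]; case: b => [|q] //=; rewrite ?addn0 // nat_of_add_pos. Qed.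

Lemma Nadd_foldr (s : seq N) :
  nat_of_bin (foldr Nadd N0 s) = sumn (map nat_of_bin s).
Proof. by elim: s => //= a s IH; rewrite NaddE IH. Qed.

Lemma Nadd_foldr_perm (s t : seq N) : perm_eq s t ->
  foldr Nadd N0 s = foldr Nadd N0 t.
Proof.
move=> pst; apply: (can_inj nat_of_binK); rewrite !Nadd_foldr.
by apply: perm_sumn; apply: perm_map.
Qed.

Fixpoint addv (u v : seq N) : seq N :=
  match u, v with
  | a :: u', b :: v' => Nadd a b :: addv u' v'
  | [::], _ => v
  | _, [::] => u
  end.

Lemma nth_addv u v i : nth N0 (addv u v) i = Nadd (nth N0 u i) (nth N0 v i).
Proof.
elim: u v i => [|a u IH] v i.
  by rewrite nth_nil.
case: v => [|b v]; last by case: i => [|i] //=.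
by rewrite nth_nil; case: (nth _ _ _).
Qed.

Lemma nth_foldr_addv (rows : seq (seq N)) i :
  nth N0 (foldr addv [::] rows) i = foldr Nadd N0 [seq nth N0 r i | r <- rows].
Proof. by elim: rows => [|r rows IH] /=; rewrite ?nth_nil // nth_addv IH. Qed.

Section Walk.
Variables (n : nat) (e : rel 'I_n) (en : nat -> nat -> bool).
Hypothesis he : forall x y : 'I_n, e x y = en x y.

Lemma filter_conv T (F : nat -> T) (x : 'I_n) :
  [seq F z | z <- [seq z <- iota 0 n | en x z]] =
  [seq F (nat_of_ord z) | z <- [seq z <- enum 'I_n | e x z]].
Proof.
rewrite -val_enum_ord filter_map -map_comp; congr map.
by apply: eq_filter => z /=; rewrite he.
Qed.

Definition stepM (M : seq (seq N)) : seq (seq N) :=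
  [seq foldr addv [::] [seq nth [::] M z | z <- [seq z <- iota 0 n | en x z]] | x <- iota 0 n].

Definition M0 : seq (seq N) :=
  [seq [seq (if x == y then Npos xH else N0) | y <- iota 0 n] | x <- iota 0 n].

Lemma nth_iota_map T (x0 : T) (f : nat -> T) (x : 'I_n) :
  nth x0 [seq f y | y <- iota 0 n] x = f x.
Proof.
by rewrite (nth_map 0) ?size_iota ?ltn_ord // nth_iota ?ltn_ord.
Qed.

Lemma walksE k (x y : 'I_n) :
  walks e k x y = nat_of_bin (nth N0 (nth [::] (iter k stepM M0) x) y).
Proof.
elim: k x y => [|k IH] x y /=.
  rewrite /M0 !nth_iota_map.
  by case: (x =P y) => [->|ne]; rewrite ?eqxx //; case: eqP => // /val_inj.
rewrite /stepM nth_iota_map nth_foldr_addv Nadd_foldr -map_comp -map_comp.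
rewrite filter_conv sumn_map_filter big_enum_cond /=.
by apply: eq_bigr => z _; rewrite IH.
Qed.

Fixpoint itl (k : nat) (M : seq (seq N)) : seq (seq (seq N)) :=
  if k is k'.+1 then M :: itl k' (stepM M) else [::].

Lemma itlE k M : itl k M = [seq iter i stepM M | i <- iota 0 k].
Proof.
elim: k M => [|k IH] M //=; rewrite IH.
have -> : iota 1 k = map (addn 1) (iota 0 k) by rewrite -iotaDl.
rewrite -map_comp; congr (_ :: _); apply: eq_map => i /=.
by rewrite add0n -iterSr.
Qed.

Definition wv (Ms : seq (seq (seq N))) (x y : nat) : seq N :=
  [seq nth N0 (nth [::] M x) y | M <- Ms].

Definition WT : seq (seq (seq N)) :=
  let Ms := itl n M0 in [seq [seq wv Ms y u | u <- iota 0 n] | y <- iota 0 n].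

Definition tab (T : seq (seq (seq N))) (y u : nat) : seq N := nth [::] (nth [::] T y) u.

Lemma wvecE (x y : 'I_n) : wvec e x y = map nat_of_bin (tab WT x y).
Proof.
rewrite /tab /WT !nth_iota_map /wv itlE /wvec -!map_comp.
by apply: eq_map => k /=; rewrite walksE.
Qed.
End Walk.

Lemma relabel (V Y X : eqType) (s1 s2 : seq V) (a b : V -> Y) (c1 c2 : V -> nat)
  (o1 o2 : V -> X) :
  (forall u v, c1 u = c2 v -> o1 u = o2 v) ->
  perm_eq [seq (a u, c1 u) | u <- s1] [seq (b v, c2 v) | v <- s2] ->
  perm_eq [seq (a u, o1 u) | u <- s1] [seq (b v, o2 v) | v <- s2].
Proof.
move=> good pe.
case: s2 pe => [|v0 s2'] pe.
  by move: (perm_size pe); rewrite size_map /=; case: s1 {pe} => //.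
set s2 := v0 :: s2' in pe *.
pose f k := head (o2 v0) [seq o2 v | v <- s2 & c2 v == k].
have headP k v : v \in s2 -> c2 v = k -> exists2 v', v' \in s2 & (c2 v' = k /\ f k = o2 v').
  move=> vs cv; rewrite /f.
  case E: [seq v <- s2 | c2 v == k] => [|v' r].
    have : v \in [seq v <- s2 | c2 v == k] by rewrite mem_filter cv eqxx vs.
    by rewrite E.
  have : v' \in [seq v <- s2 | c2 v == k] by rewrite E mem_head.
  by rewrite mem_filter => /andP[/eqP cv' v's]; exists v'.
have A u : u \in s1 -> o1 u = f (c1 u).
  move=> us.
  have : (a u, c1 u) \in [seq (b v, c2 v) | v <- s2].
    by rewrite -(perm_mem pe); apply: map_f.
  case/mapP=> v vs [_ cv].
  have [v' v's [cv' ->]] := headP (c1 u) v vs (esym cv).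
  by apply: good.
have B v : v \in s2 -> o2 v = f (c2 v).
  move=> vs.
  have : (b v, c2 v) \in [seq (a u, c1 u) | u <- s1].
    by rewrite (perm_mem pe); apply: map_f.
  case/mapP=> u us [_ cu].
  have [v' v's [cv' ->]] := headP (c2 v) v vs erefl.
  by rewrite -(good u v) // (good u v') // cv'.
have -> : [seq (a u, o1 u) | u <- s1] = [seq (p.1, f p.2) | p <- [seq (a u, c1 u) | u <- s1]].
  by rewrite -map_comp; apply/eq_in_map => u us /=; rewrite A.
have -> : [seq (b v, o2 v) | v <- s2] = [seq (p.1, f p.2) | p <- [seq (b v, c2 v) | v <- s2]].
  by rewrite -map_comp; apply/eq_in_map => v vs /=; rewrite B.
exact: perm_map.
Qed.

Fixpoint lexle (s t : seq N) : bool :=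
  match s, t with
  | [::], _ => true
  | _ :: _, [::] => false
  | a :: s', b :: t' => if a == b then lexle s' t' else BinNat.N.ltb a b
  end.

Definition Rle (p q : seq N * nat) : bool := (p.2 < q.2) || ((p.2 == q.2) && lexle p.1 q.1).

Section Omega.
Variables (n : nat) (e1 e2 : rel 'I_n) (en1 en2 : nat -> nat -> bool).
Hypothesis he1 : forall x y : 'I_n, e1 x y = en1 x y.
Hypothesis he2 : forall x y : 'I_n, e2 x y = en2 x y.

Definition check0 (T1 T2 : seq (seq (seq N))) (c1 c2 : seq nat) : bool :=
  all (fun y => all (fun z =>
     (nth 0 c1 y != nth 0 c2 z) || (tab T1 y y == tab T2 z z)) (iota 0 n)) (iota 0 n).

Definition rowlist (T : seq (seq (seq N))) (c : seq nat) (y : nat) :=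
  [seq (tab T y u, nth 0 c u) | u <- iota 0 n].

Definition checkS (T1 T2 : seq (seq (seq N))) (c1 c2 d1 d2 : seq nat) : bool :=
  let S1 := [seq sort Rle (rowlist T1 c1 y) | y <- iota 0 n] in
  let S2 := [seq sort Rle (rowlist T2 c2 y) | y <- iota 0 n] in
  all (fun y => all (fun z =>
     (nth 0 d1 y != nth 0 d2 z) ||
     ((nth 0 c1 y == nth 0 c2 z) && (nth [::] S1 y == nth [::] S2 z))) (iota 0 n)) (iota 0 n).

Definition good r (c1 c2 : seq nat) :=
  forall y z : 'I_n, nth 0 c1 y = nth 0 c2 z -> omega e1 r y = omega e2 r z.

Lemma memI (y : 'I_n) : nat_of_ord y \in iota 0 n.
Proof. by rewrite mem_iota /= ltn_ord. Qed.

Lemma good0 c1 c2 : check0 (WT n en1) (WT n en2) c1 c2 -> good 0 c1 c2.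
Proof.
move=> /allP ch y z eqc /=.
have /allP := ch y (memI y) => /(_ z (memI z)).
rewrite eqc eqxx /= => /eqP eqT.
by rewrite (wvecE he1) (wvecE he2) eqT.
Qed.

Lemma goodS r c1 c2 d1 d2 : good r c1 c2 ->
  checkS (WT n en1) (WT n en2) c1 c2 d1 d2 -> good r.+1 d1 d2.
Proof.
move=> gr /allP ch y z eqd.
have /allP := ch y (memI y) => /(_ z (memI z)).
rewrite eqd eqxx /= => /andP[/eqP eqc /eqP eqS].
rewrite !(nth_iota_map _ (fun y => sort Rle (rowlist _ _ y))) in eqS.
rewrite /= (gr y z eqc); congr (_, _); apply/eq_seq_msetP.
apply: (relabel (a := wvec e1 y) (b := wvec e2 z) (o1 := omega e1 r) (o2 := omega e2 r)
  (c1 := fun u => nth 0 c1 u) (c2 := fun u => nth 0 c2 u)) => //.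
set r1 := rowlist (WT n en1) c1 y in eqS; set r2 := rowlist (WT n en2) c2 z in eqS.
have p1 : perm_eq (sort Rle r1) r1 by rewrite (perm_sort Rle r1 r1) perm_refl.
have p2 : perm_eq (sort Rle r2) r2 by rewrite (perm_sort Rle r2 r2) perm_refl.
have p12 : perm_eq r1 r2 by rewrite eqS perm_sym in p1; exact: perm_trans p1 p2.
have := perm_map (fun p => (map nat_of_bin p.1, p.2)) p12.
rewrite /r1 /r2 /rowlist -!val_enum_ord -!map_comp.
congr perm_eq; apply: eq_map => u /=; by rewrite ?(wvecE he1) ?(wvecE he2).
Qed.

Lemma good_graph c1 c2 : good 3 c1 c2 ->
  perm_eq [seq nth 0 c1 x | x <- iota 0 n] [seq nth 0 c2 x | x <- iota 0 n] ->
  omega_graph e1 3 = omega_graph e2 3.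
Proof.
move=> g3 pe; apply/eq_seq_msetP.
have P : perm_eq [seq (tt, nth 0 c1 (nat_of_ord u)) | u <- enum 'I_n]
                 [seq (tt, nth 0 c2 (nat_of_ord u)) | u <- enum 'I_n].
  by have := perm_map (fun k => (tt, k)) pe; rewrite -!val_enum_ord -!map_comp.
have H := relabel (a := fun _ : 'I_n => tt) (b := fun _ : 'I_n => tt)
  (o1 := omega e1 3) (o2 := omega e2 3)
  (c1 := fun u => nth 0 c1 u) (c2 := fun u => nth 0 c2 u) g3 P.
by have := perm_map snd H; rewrite -!map_comp.
Qed.
End Omega.

Definition Pm : N := Npos (xI (xI (xI (xO (xO (xO (xO (xO (xO (xI (xO (xI (xO (xO (xI (xI (xO (xI (xO (xI (xI (xO (xO (xI (xI (xI (xO (xI (xI (xH)))))))))))))))))))))))))))))).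
Definition K1 : N := Npos (xI (xO (xO (xI (xO (xI (xI (xO (xO (xI (xO (xI (xI (xI (xH))))))))))))))).
Definition K2 : N := Npos (xI (xO (xI (xO (xO (xI (xH))))))).
Definition K3 : N := Npos (xI (xO (xO (xO (xH))))).
Definition K4 : N := Npos (xI (xI (xH))).
Definition hsh (a b : N) : N :=
  BinNat.N.modulo (BinNat.N.add (BinNat.N.add (BinNat.N.mul a K1) (BinNat.N.mul b K2)) K3) Pm.
Definition gN (m : N) : N :=
  BinNat.N.modulo (BinNat.N.add (BinNat.N.mul (BinNat.N.mul m m) m) K4) Pm.

Fixpoint inv (r : nat) : color_type r -> N :=
  match r return color_type r -> N with
  | 0 => fun _ => Npos xH
  | r'.+1 => fun c : (color_type r' * multiset (color_type r'))%type =>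
      hsh (inv c.1) (foldr Nadd N0 [seq gN (inv m) | m <- enum_mset c.2])
  end.

Section WL.
Variables (n : nat) (e : rel 'I_n) (en : nat -> nat -> bool).
Hypothesis he : forall x y : 'I_n, e x y = en x y.

Definition stepC (v : seq N) : seq N :=
  [seq hsh (nth N0 v x) (foldr Nadd N0 [seq gN (nth N0 v y) | y <- [seq y <- iota 0 n | en x y]])
  | x <- iota 0 n].

Definition colv r := iter r stepC (nseq n (Npos xH)).

Lemma invE r (x : 'I_n) : inv (color e r x) = nth N0 (colv r) x.
Proof.
elim: r x => [|r IH] x /=.
  by rewrite nth_nseq ltn_ord.
rewrite /stepC (nth_iota_map _ (fun x => hsh _ _)); congr hsh; first exact: IH.
rewrite (Nadd_foldr_perm (t := [seq gN (inv m) | m <- [seq color e r y | y <- enum 'I_n & e x y]])).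
  by rewrite (filter_conv he) -map_comp; congr foldr; apply: eq_map => y /=; rewrite IH.
by apply: perm_map; apply: perm_eq_seq_mset.
Qed.

Lemma size_colv r : size (colv r) = n.
Proof. by elim: r => [|r IH] /=; rewrite ?size_nseq // size_map size_iota. Qed.

Lemma WL1_inv : foldr Nadd N0 [seq inv m | m <- enum_mset (WL1 e)] =
  foldr Nadd N0 (colv n).
Proof.
have h : [seq nth N0 (colv n) x | x <- iota 0 n] = colv n.
  by have := mkseq_nth N0 (colv n); rewrite size_colv.
rewrite -h.
rewrite (Nadd_foldr_perm (t := [seq inv m | m <- [seq color e n x | x <- enum 'I_n]])).
  by rewrite -val_enum_ord -!map_comp; congr foldr; apply: eq_map => y /=; rewrite invE.
by apply: perm_map; apply: perm_eq_seq_mset.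
Qed.
End WL.

Definition nbG : seq (seq nat) := [:: [:: 4; 7; 32; 40]; [:: 5; 6; 40]; [:: 5; 6; 32]; [:: 4; 7]; [:: 0; 3; 8; 11; 33]; [:: 1; 2; 9; 10; 33]; [:: 1; 2; 8; 11]; [:: 0; 3; 9; 10]; [:: 4; 6; 12; 15; 34]; [:: 5; 7; 13; 14; 34]; [:: 5; 7; 12; 15]; [:: 4; 6; 13; 14]; [:: 8; 10; 16; 19; 35]; [:: 9; 11; 17; 18; 35]; [:: 9; 11; 16; 19]; [:: 8; 10; 17; 18]; [:: 12; 14; 20; 23; 36]; [:: 13; 15; 21; 22; 36]; [:: 13; 15; 20; 23]; [:: 12; 14; 21; 22]; [:: 16; 18; 24; 27; 37]; [:: 17; 19; 25; 26; 37]; [:: 17; 19; 24; 27]; [:: 16; 18; 25; 26]; [:: 20; 22; 28; 31; 38]; [:: 21; 23; 29; 30; 38]; [:: 21; 23; 28; 31]; [:: 20; 22; 29; 30]; [:: 24; 26; 39; 41]; [:: 25; 27; 41]; [:: 25; 27; 39]; [:: 24; 26]; [:: 0; 2]; [:: 4; 5]; [:: 8; 9]; [:: 12; 13]; [:: 16; 17]; [:: 20; 21]; [:: 24; 25]; [:: 28; 30]; [:: 0; 1]; [:: 28; 29]].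
Definition nbH : seq (seq nat) := [:: [:: 4; 7; 32; 40]; [:: 5; 6; 40]; [:: 5; 6; 32]; [:: 4; 7]; [:: 0; 3; 8; 11; 33]; [:: 1; 2; 9; 10; 33]; [:: 1; 2; 8; 11]; [:: 0; 3; 9; 10]; [:: 4; 6; 12; 15; 34]; [:: 5; 7; 13; 14; 34]; [:: 5; 7; 12; 15]; [:: 4; 6; 13; 14]; [:: 8; 10; 16; 19; 35]; [:: 9; 11; 17; 18; 35]; [:: 9; 11; 16; 19]; [:: 8; 10; 17; 18]; [:: 12; 14; 20; 23; 36]; [:: 13; 15; 21; 22; 36]; [:: 13; 15; 20; 23]; [:: 12; 14; 21; 22]; [:: 16; 18; 24; 27; 37]; [:: 17; 19; 25; 26; 37]; [:: 17; 19; 24; 27]; [:: 16; 18; 25; 26]; [:: 20; 22; 28; 31; 38]; [:: 21; 23; 29; 30; 38]; [:: 21; 23; 28; 31]; [:: 20; 22; 29; 30]; [:: 24; 26; 39]; [:: 25; 27]; [:: 25; 27; 39; 41]; [:: 24; 26; 41]; [:: 0; 2]; [:: 4; 5]; [:: 8; 9]; [:: 12; 13]; [:: 16; 17]; [:: 20; 21]; [:: 24; 25]; [:: 28; 30]; [:: 0; 1]; [:: 30; 31]].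
Definition lG0 : seq nat := [:: 0; 1; 1; 2; 3; 3; 4; 4; 5; 5; 6; 6; 7; 7; 8; 8; 7; 7; 8; 8; 5; 5; 6; 6; 3; 3; 4; 4; 0; 1; 1; 2; 9; 10; 11; 12; 12; 11; 10; 9; 9; 9].
Definition lH0 : seq nat := [:: 0; 1; 1; 2; 3; 3; 4; 4; 5; 5; 6; 6; 7; 7; 8; 8; 7; 7; 8; 8; 5; 5; 6; 6; 3; 3; 4; 4; 1; 2; 0; 1; 9; 10; 11; 12; 12; 11; 10; 9; 9; 9].
Definition lG1 : seq nat := [:: 0; 1; 1; 2; 3; 4; 5; 6; 7; 7; 8; 8; 9; 9; 10; 10; 9; 9; 10; 10; 7; 7; 8; 8; 3; 4; 6; 5; 0; 1; 1; 2; 11; 12; 13; 14; 14; 13; 12; 11; 11; 11].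
Definition lH1 : seq nat := [:: 0; 1; 1; 2; 3; 4; 5; 6; 7; 7; 8; 8; 9; 9; 10; 10; 9; 9; 10; 10; 7; 7; 8; 8; 4; 3; 5; 6; 1; 2; 0; 1; 11; 12; 13; 14; 14; 13; 12; 11; 11; 11].
Definition lG2 : seq nat := [:: 0; 1; 1; 2; 3; 4; 5; 6; 7; 8; 9; 10; 11; 11; 12; 12; 11; 11; 12; 12; 7; 8; 10; 9; 3; 4; 6; 5; 0; 1; 1; 2; 13; 14; 15; 16; 16; 15; 14; 13; 13; 13].
Definition lH2 : seq nat := [:: 0; 1; 1; 2; 3; 4; 5; 6; 7; 8; 9; 10; 11; 11; 12; 12; 11; 11; 12; 12; 8; 7; 9; 10; 4; 3; 5; 6; 1; 2; 0; 1; 13; 14; 15; 16; 16; 15; 14; 13; 13; 13].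
Definition lG3 : seq nat := [:: 0; 1; 1; 2; 3; 4; 5; 6; 7; 8; 9; 10; 11; 12; 13; 14; 11; 12; 14; 13; 7; 8; 10; 9; 3; 4; 6; 5; 0; 1; 1; 2; 15; 16; 17; 18; 18; 17; 16; 15; 15; 15].
Definition lH3 : seq nat := [:: 0; 1; 1; 2; 3; 4; 5; 6; 7; 8; 9; 10; 11; 12; 13; 14; 12; 11; 13; 14; 8; 7; 9; 10; 4; 3; 5; 6; 1; 2; 0; 1; 15; 16; 17; 18; 18; 17; 16; 15; 15; 15].

Definition enG (x y : nat) := y \in nth [::] nbG x.
Definition enH (x y : nat) := y \in nth [::] nbH x.
Definition Gr : rel 'I_42 := fun x y => enG x y.
Definition Hr : rel 'I_42 := fun x y => enH x y.

Lemma symirr (en : nat -> nat -> bool) :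
  all (fun x => all (fun y => en x y == en y x) (iota 0 42) && ~~ en x x) (iota 0 42) ->
  symmetric (fun x y : 'I_42 => en x y) /\ irreflexive (fun x y : 'I_42 => en x y).
Proof.
move=> h; split=> [x y|x]; have /andP[/allP a b] := allP h x (memI x).
  by apply/eqP; apply: a; apply: memI.
by apply/negbTE.
Qed.

Lemma symG : symmetric Gr /\ irreflexive Gr.
Proof. by apply: symirr; vm_compute. Qed.
Lemma symH : symmetric Hr /\ irreflexive Hr.
Proof. by apply: symirr; vm_compute. Qed.

Lemma c0 : check0 42 (WT 42 enG) (WT 42 enH) lG0 lH0.
Proof. by vm_compute. Qed.
Lemma c1 : checkS 42 (WT 42 enG) (WT 42 enH) lG0 lH0 lG1 lH1.
Proof. by vm_compute. Qed.
Lemma c2 : checkS 42 (WT 42 enG) (WT 42 enH) lG1 lH1 lG2 lH2.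
Proof. by vm_compute. Qed.
Lemma c3 : checkS 42 (WT 42 enG) (WT 42 enH) lG2 lH2 lG3 lH3.
Proof. by vm_compute. Qed.
Lemma cp : perm_eq [seq nth 0 lG3 x | x <- iota 0 42] [seq nth 0 lH3 x | x <- iota 0 42].
Proof. by vm_compute. Qed.

Lemma he1 : forall x y : 'I_42, Gr x y = enG x y. Proof. by []. Qed.
Lemma he2 : forall x y : 'I_42, Hr x y = enH x y. Proof. by []. Qed.
Definition g0 := @good0 42 Gr Hr enG enH he1 he2 lG0 lH0 c0.
Definition g1 := @goodS 42 Gr Hr enG enH he1 he2 0 lG0 lH0 lG1 lH1 g0 c1.
Definition g2 := @goodS 42 Gr Hr enG enH he1 he2 1 lG1 lH1 lG2 lH2 g1 c2.
Definition g3 := @goodS 42 Gr Hr enG enH he1 he2 2 lG2 lH2 lG3 lH3 g2 c3.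
Definition omegaGH : omega_graph Gr 3 = omega_graph Hr 3 :=
  @good_graph 42 Gr Hr lG3 lH3 g3 cp.

Lemma wlGH : WL1 Gr <> WL1 Hr.
Proof.
move=> E.
have := @WL1_inv 42 Gr enG he1; rewrite E (@WL1_inv 42 Hr enH he2).
by vm_compute.
Qed.
Theorem theorem6p7 :
  exists (N : nat) (G H : rel 'I_N),
    (symmetric G /\ irreflexive G) /\ (symmetric H /\ irreflexive H) /\
    omega_graph G 3 = omega_graph H 3 /\ WL1 G <> WL1 H.
Proof.
exists 42, Gr, Hr; split; first exact: symG.
split; first exact: symH.
split; first exact: omegaGH.
exact: wlGH.
Qed.
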